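(* Let $n\ge3$, $e\ge2$, $1\le k\le e-1$. The assignment $q_1\mapsto\tilde t_i\tilde t_{i-k}$ (an element independent of $i\in\mathbb{Z}/e\mathbb{Z}$) and $q_m\mapsto\tilde s_{m+1}$ for $2\le m\le n-1$ defines an injective group homomorphism from the Artin–Tits group $B(2,1,n-1)$ into $B^{(k)}(e,e,n)$.
   Context: $B(2,1,n-1)$ is the Artin–Tits group of type $B_{n-1}$ with generators $q_1,\dots,q_{n-1}$ and relations $q_1q_2q_1q_2=q_2q_1q_2q_1$, $q_mq_{m+1}q_m=q_{m+1}q_mq_{m+1}$ for $2\le m\le n-2$, and $q_aq_b=q_bq_a$ for $|a-b|>1$. $B^{(k)}(e,e,n)$ is the group with generators $\tilde t_0,\dots,\tilde t_{e-1},\tilde s_3,\dots,\tilde s_n$ and relations: $\tilde s_i\tilde s_j\tilde s_i=\tilde s_j\tilde s_i\tilde s_j$ for $|i-j|=1$; $\tilde s_i\tilde s_j=\tilde s_j\tilde s_i$ for $|i-j|>1$; $\tilde s_3\tilde t_i\tilde s_3=\tilde t_i\tilde s_3\tilde t_i$ for $i\in\mathbb{Z}/e\mathbb{Z}$; $\tilde s_j\tilde t_i=\tilde t_i\tilde s_j$ for $i\in\mathbb{Z}/e\mathbb{Z}$, $4\le j\le n$; $\tilde t_i\tilde t_{i-k}=\tilde t_j\tilde t_{j-k}$ for $i,j\in\mathbb{Z}/e\mathbb{Z}$ (it is the group of fractions of the Garside monoid with the same presentation). *)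

(* Defs.v *)
(* Groups given by presentations, encoded as words in the
   free group (letters = generator * sign, true = positive) modulo the
   congruence generated by free cancellation and the defining relations. *)
From mathcomp Require Import all_boot.
Set Implicit Arguments. Unset Strict Implicit. Unset Printing Implicit Defensive.

Definition inv_word (G : Type) (w : seq (G * bool)) : seq (G * bool) :=
  rev (map (fun x => (x.1, ~~ x.2)) w).

Inductive pres_eq (G : Type) (R : seq (G * bool) -> seq (G * bool) -> Prop) :
    seq (G * bool) -> seq (G * bool) -> Prop :=
| pe_refl w : pres_eq R w w
| pe_sym u v : pres_eq R u v -> pres_eq R v u
| pe_trans u v w : pres_eq R u v -> pres_eq R v w -> pres_eq R u w
| pe_ctx a b u v : pres_eq R u v -> pres_eq R (a ++ u ++ b) (a ++ v ++ b)
| pe_rel u v : R u v -> pres_eq R u v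
| pe_free g s : pres_eq R [:: (g, s); (g, ~~ s)] [::].

(* B(2,1,n-1): generator a : 'I_(n-1) stands for q_(a+1). *)
Inductive BRel (n : nat) : seq ('I_(n-1) * bool) -> seq ('I_(n-1) * bool) -> Prop :=
| brel_B (a b : 'I_(n-1)) : val a = 0 -> val b = 1 ->
    @BRel n [:: (a, true); (b, true); (a, true); (b, true)]
         [:: (b, true); (a, true); (b, true); (a, true)]
| brel_braid (a b : 'I_(n-1)) : 1 <= val a -> val b = (val a).+1 ->
    @BRel n [:: (a, true); (b, true); (a, true)] [:: (b, true); (a, true); (b, true)]
| brel_comm (a b : 'I_(n-1)) : (val a).+1 < val b ->
    @BRel n [:: (a, true); (b, true)] [:: (b, true); (a, true)].

(* B^(k)(e,e,n): generators inl i = t~_i (i in Z/eZ), inr j = s~_(j+3). *)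
Definition Tgen (e n : nat) := ('I_e + 'I_(n-2))%type.

Inductive TRel (e n k : nat) : seq (Tgen e n * bool) -> seq (Tgen e n * bool) -> Prop :=
| trel_sbraid (j1 j2 : 'I_(n-2)) : val j2 = (val j1).+1 ->
    @TRel e n k [:: (inr j1, true); (inr j2, true); (inr j1, true)]
         [:: (inr j2, true); (inr j1, true); (inr j2, true)]
| trel_scomm (j1 j2 : 'I_(n-2)) : (val j1).+1 < val j2 ->
    @TRel e n k [:: (inr j1, true); (inr j2, true)] [:: (inr j2, true); (inr j1, true)]
| trel_st (j : 'I_(n-2)) (i : 'I_e) : val j = 0 ->
    @TRel e n k [:: (inr j, true); (inl i, true); (inr j, true)]
         [:: (inl i, true); (inr j, true); (inl i, true)]
| trel_stcomm (j : 'I_(n-2)) (i : 'I_e) : 1 <= val j ->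
    @TRel e n k [:: (inr j, true); (inl i, true)] [:: (inl i, true); (inr j, true)]
| trel_tt (i i' j j' : 'I_e) :
    val i' = (val i + (e - k)) %% e -> val j' = (val j + (e - k)) %% e ->
    @TRel e n k [:: (inl i, true); (inl i', true)] [:: (inl j, true); (inl j', true)].

(* image of q_1 : t~_0 t~_(0-k) = t~_0 t~_((e-k) mod e) *)
Definition q1_image (e n k : nat) : seq (Tgen e n * bool) :=
  match insub 0 : option 'I_e, insub ((e - k) %% e) : option 'I_e with
  | Some i0, Some i1 => [:: (inl i0, true); (inl i1, true)]
  | _, _ => [::]
  end.

Definition gen_image (e n k : nat) (a : 'I_(n-1)) : seq (Tgen e n * bool) :=
  if val a == 0 then q1_image e n k
  else match insub (val a).-1 : option 'I_(n-2) with
       | Some j => [:: (inr j, true)]   (* q_m |-> s~_(m+1), m = a+1, j = m-2 *)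
       | None => [::]
       end.

Arguments gen_image : clear implicits.

Definition phi_letter (e n k : nat) (x : 'I_(n-1) * bool) : seq (Tgen e n * bool) :=
  if x.2 then gen_image e n k x.1 else inv_word (gen_image e n k x.1).

Arguments phi_letter : clear implicits.

Definition phi_word (e n k : nat) (w : seq ('I_(n-1) * bool)) : seq (Tgen e n * bool) :=
  flatten (map (phi_letter e n k) w).
Arguments phi_word : clear implicits.

(* Main.v *)
Require Import Defs.
From mathcomp Require Import all_boot zify.
From Stdlib Require Import Setoid Morphisms.
Set Implicit Arguments. Unset Strict Implicit.

Section Grp.
Variables (G : Type) (R : seq (G*bool) -> seq (G*bool) -> Prop).
Local Notation "u ≈ v" := (pres_eq R u v) (at level 70).
Global Instance pe_equiv : Equivalence (pres_eq R).
Proof. split; [exact: pe_refl| exact: pe_sym| exact: pe_trans]. Qed.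
Global Instance cat_proper : Proper (pres_eq R ==> pres_eq R ==> pres_eq R) (@cat _).
Proof.
move=> a b H c d H'. apply: (pe_trans (v := b ++ c)).
  exact: (pe_ctx [::] c H).
by have := pe_ctx b [::] H'; rewrite /= !cats0.
Qed.

Hint Resolve pe_refl : core.
Lemma inv_wordK' (w : seq (G * bool)) : inv_word (inv_word w) = w.
Proof.
rewrite /inv_word map_rev revK -map_comp.
elim: w => //= -[g s] w ->; by rewrite negbK.
Qed.

Lemma inv_cat (u v : seq (G*bool)) : inv_word (u ++ v) = inv_word v ++ inv_word u.
Proof. by rewrite /inv_word map_cat rev_cat. Qed.

Lemma cancel_r (w : seq (G * bool)) : w ++ inv_word w ≈ [::].
Proof.
elim: w => [|x w IH] /=; first reflexivity.
rewrite /inv_word /= rev_cons -/(inv_word w) -cats1.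
have := pe_ctx [:: x] [:: (x.1, ~~ x.2)] IH; rewrite /= -catA => H.
apply: pe_trans H _.
by case: x => g s /=; apply: pe_free.
Qed.

Lemma cancel_l (w : seq (G * bool)) : inv_word w ++ w ≈ [::].
Proof. by have := cancel_r (inv_word w); rewrite inv_wordK'. Qed.

Lemma cancel_l' (w u : seq (G * bool)) : inv_word w ++ (w ++ u) ≈ u.
Proof. by rewrite catA cancel_l. Qed.
Lemma cancel_r' (w u : seq (G * bool)) : w ++ (inv_word w ++ u) ≈ u.
Proof. by rewrite catA cancel_r. Qed.

Lemma lcancel (y u v : seq (G*bool)) : y ++ u ≈ y ++ v -> u ≈ v.
Proof. move=> H; by rewrite -(cancel_l' y u) H cancel_l'. Qed.

Lemma conj_lem (u x y : seq (G*bool)) : u ++ x ≈ y ++ u -> x ++ inv_word u ≈ inv_word u ++ y.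
Proof.
move=> H; apply: (@lcancel u).
by rewrite catA H -catA cancel_r cats0 cancel_r'.
Qed.

Lemma comm_inv (u x : seq (G*bool)) : u ++ x ≈ x ++ u -> inv_word u ++ x ≈ x ++ inv_word u.
Proof. move=> H; symmetry; exact: conj_lem. Qed.

Lemma comm_cat (u v x : seq (G*bool)) : u ++ x ≈ x ++ u -> v ++ x ≈ x ++ v ->
  (u ++ v) ++ x ≈ x ++ (u ++ v).
Proof. move=> H1 H2; by rewrite -catA H2 catA H1 catA. Qed.

Lemma thru (y x x' z z' : seq (G*bool)) : y ++ x ≈ x' ++ y -> y ++ z ≈ z' ++ y ->
  y ++ (x ++ z) ≈ (x' ++ z') ++ y.
Proof. move=> H1 H2; by rewrite catA H1 -catA H2 catA. Qed.
End Grp.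

Global Hint Resolve pe_refl : core.
Section H.
Variables (e n k : nat).

Lemma phi_cat u v : phi_word e n k (u ++ v) = phi_word e n k u ++ phi_word e n k v.
Proof. by rewrite /phi_word map_cat flatten_cat. Qed.

Lemma inv_wordK (G : Type) (w : seq (G * bool)) : inv_word (inv_word w) = w.
Proof.
rewrite /inv_word map_rev revK -map_comp.
elim: w => //= -[g s] w ->; by rewrite negbK.
Qed.

Lemma cancel_inv (G : Type) R (w : seq (G * bool)) : pres_eq R (w ++ inv_word w) [::].
Proof.
elim: w => [|x w IH] /=; first exact: pe_refl.
rewrite /inv_word /= rev_cons -/(inv_word w) -cats1.
have := pe_ctx [:: x] [:: (x.1, ~~ x.2)] IH; rewrite /= -catA => H.
apply: pe_trans H _.
by case: x => g s /=; apply: pe_free.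
Qed.

Lemma q1_spec : 0 < e -> exists i0 i1 : 'I_e, val i0 = 0 /\ val i1 = (e - k) %% e /\
  q1_image e n k = [:: (inl i0, true); (inl i1, true)].
Proof.
move=> e0; rewrite /q1_image.
case: insubP => [i0 _ Hi0|]; last by rewrite e0.
case: insubP => [i1 _ Hi1|]; last by rewrite ltn_mod e0.
by exists i0, i1.
Qed.

Lemma gen_pos (a : 'I_(n-1)) : 0 < val a -> exists j : 'I_(n-2),
  val j = (val a).-1 /\ gen_image e n k a = [:: (inr j, true)].
Proof.
move=> a0; rewrite /gen_image; case: eqP => [E|_]; first by rewrite E in a0.
case: insubP => [j _ Hj|]; first by exists j.
move=> /negP[]; move: (ltn_ord a) a0; case: a => /= a _; case: a => // m; lia.
Qed.

Lemma gen_zero (a : 'I_(n-1)) : val a = 0 -> gen_image e n k a = q1_image e n k.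
Proof. by rewrite /gen_image => ->. Qed.

Lemma phi1 (a : 'I_(n-1)) : phi_word e n k [:: (a, true)] = gen_image e n k a.
Proof. by rewrite /phi_word /= cats0. Qed.

End H.

Lemma step (G : Type) (R : seq (G * bool) -> seq (G * bool) -> Prop) p q u v w :
  R u v -> pres_eq R (p ++ v ++ q) w -> pres_eq R (p ++ u ++ q) w.
Proof. by move=> H; apply: pe_trans; apply: pe_ctx; apply: pe_rel. Qed.
Lemma stepr (G : Type) (R : seq (G * bool) -> seq (G * bool) -> Prop) p q u v w :
  R v u -> pres_eq R (p ++ v ++ q) w -> pres_eq R (p ++ u ++ q) w.
Proof. by move=> H; apply: pe_trans; apply: pe_ctx; apply: pe_sym; apply: pe_rel. Qed.


Section BW.
Variable n : nat.
Local Notation L := ('I_(n-1) * bool)%type.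
Local Notation "u ≈ v" := (pres_eq (@BRel n) u v) (at level 70).

Definition qw (i : nat) (b : bool) : seq L :=
  if insub i is Some o then [:: (o, b)] else [::].
Local Notation Q i := (qw i true).

Lemma qw_ok i b (H : i < n - 1) : qw i b = [:: (Ordinal H, b)].
Proof. rewrite /qw; case: insubP => [o _ Ho|]; last by rewrite H.
by congr [:: (_, _)]; apply: val_inj.
Qed.

Lemma inv_qw i b : inv_word (qw i b) = qw i (~~ b).
Proof. by rewrite /qw; case: insubP. Qed.

Lemma freeQ i b : qw i b ++ qw i (~~ b) ≈ [::].
Proof. by rewrite -inv_qw cancel_r. Qed.

Lemma braidQ i : 1 <= i -> i.+1 < n - 1 -> Q i ++ Q i.+1 ++ Q i ≈ Q i.+1 ++ Q i ++ Q i.+1.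
Proof.
move=> H1 H2; have H3 : i < n - 1 by lia.
rewrite (qw_ok _ H2) (qw_ok _ H3) /=; apply: pe_rel; exact: brel_braid.
Qed.

Lemma commQ i j : i.+1 < j -> j < n - 1 -> Q i ++ Q j ≈ Q j ++ Q i.
Proof.
move=> H1 H2; have H3 : i < n - 1 by lia.
rewrite (qw_ok _ H2) (qw_ok _ H3) /=; apply: pe_rel; exact: brel_comm.
Qed.

Lemma BQ : 1 < n - 1 -> Q 0 ++ Q 1 ++ Q 0 ++ Q 1 ≈ Q 1 ++ Q 0 ++ Q 1 ++ Q 0.
Proof.
move=> H2; have H3 : 0 < n - 1 by lia.
rewrite (qw_ok _ H2) (qw_ok _ H3) /=; apply: pe_rel; exact: brel_B.
Qed.

Definition Wz (c : nat) : seq L := flatten [seq Q m | m <- iota 1 c].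

Lemma WzS c : Wz c.+1 = Wz c ++ Q c.+1.
Proof.
have E : iota 1 c.+1 = iota 1 c ++ [:: c.+1] by have := iotaD 1 c 1; rewrite addn1 add1n => ->.
by rewrite /Wz E map_cat flatten_cat /= cats0.
Qed.

Lemma comm_Wz x c : c.+1 < x -> x < n - 1 -> Wz c ++ Q x ≈ Q x ++ Wz c.
Proof.
move=> H1 H2; elim: c H1 => [|c IH] H1; first by rewrite /= cats0.
rewrite WzS; apply: comm_cat; first by apply: IH; lia.
apply: commQ => //; lia.
Qed.

Lemma shift c m : 1 <= m < c -> c < n - 1 -> Wz c ++ Q m ≈ Q m.+1 ++ Wz c.
Proof.
elim: c m => [|c IH] m Hm Hc; first lia.
have [Hlt|Heq] : m < c \/ m = c by lia.
  rewrite WzS -catA -commQ; [|lia|lia].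
  by rewrite catA IH; [rewrite -catA|lia|lia].
subst m; case: c IH Hm Hc => [|d] IH Hm Hc; first lia.
rewrite (WzS d.+1) (WzS d) -!catA braidQ; [|lia|lia].
rewrite catA comm_Wz; [|lia|lia]; by rewrite -!catA.
Qed.

Lemma shift_seq c s : all (fun m => 0 < m < c) s -> c < n - 1 ->
  Wz c ++ flatten [seq Q m | m <- s] ≈ flatten [seq Q m.+1 | m <- s] ++ Wz c.
Proof.
move=> Hs Hc; elim: s Hs => [|m s IH] /=; first by rewrite cats0.
move=> /andP[Hm Hs].
by rewrite catA shift // -catA IH // catA.
Qed.

Lemma map_succ_iota m k : [seq x.+1 | x <- iota m k] = iota m.+1 k.
Proof. by elim: k m => //= k IH m; rewrite IH. Qed.

Definition Az a : seq L := inv_word (Wz a) ++ Q 0 ++ Wz a.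

Lemma Wz_Az a : Wz a ++ Az a ≈ Q 0 ++ Wz a.
Proof. by rewrite /Az cancel_r'. Qed.

Lemma AzS a : Az a.+1 = qw a.+1 false ++ Az a ++ Q a.+1.
Proof. by rewrite /Az WzS inv_cat inv_qw /= !catA. Qed.

Definition Xw a : seq L := flatten [seq Q m | m <- iota 2 a].

Lemma Xw_Q0 a : a.+1 < n - 1 -> Xw a ++ Q 0 ≈ Q 0 ++ Xw a.
Proof.
move=> Ha; rewrite /Xw; have : all (fun m => 1 < m < n - 1) (iota 2 a).
  apply/allP => x; rewrite mem_iota => ?; lia.
elim: (iota 2 a) => [|m s IH] /=; first by rewrite cats0.
move=> /andP[Hm Hs]; apply: comm_cat; last exact: IH.
symmetry; apply: commQ; lia.
Qed.

Lemma Qshift_iota k : forall m, [seq Q x.+1 | x <- iota m k] = [seq Q x | x <- iota m.+1 k].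
Proof. by elim: k => //= k IH m; rewrite IH. Qed.

Lemma key a : a.+1 < n - 1 -> (Xw a ++ Wz a) ++ Q a.+1 ≈ Q 1 ++ (Xw a ++ Wz a).
Proof.
move=> Ha; rewrite -catA -WzS.
have E : Q 1 ++ Xw a = Wz a.+1 by [].
rewrite catA E.
have E2 : [seq Q m.+1 | m <- iota 1 a] = [seq Q m | m <- iota 2 a].
  exact: Qshift_iota.
have := @shift_seq a.+1 (iota 1 a).
rewrite E2 -/(Wz a) -/(Xw a) => ->//.
apply/allP => x; rewrite mem_iota => ?; lia.
Qed.

Lemma AQ2 a : a.+1 < n - 1 ->
  Az a ++ Q a.+1 ++ Az a ++ Q a.+1 ≈ Q a.+1 ++ Az a ++ Q a.+1 ++ Az a.
Proof.
move=> Ha; apply: (@lcancel _ _ (Xw a ++ Wz a)).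
have HA : (Xw a ++ Wz a) ++ Az a ≈ Q 0 ++ (Xw a ++ Wz a).
  by rewrite -catA Wz_Az !catA Xw_Q0.
have HQ := key Ha.
rewrite (thru HA (thru HQ (thru HA HQ))) (thru HQ (thru HA (thru HQ HA))).
rewrite BQ //; lia.
Qed.

Lemma Az_far a b : a.+1 < b -> b < n - 1 -> Az a ++ Q b ≈ Q b ++ Az a.
Proof.
move=> H1 H2; rewrite /Az; apply: comm_cat.
  apply: comm_inv; apply: comm_Wz => //.
apply: comm_cat; last by apply: comm_Wz.
apply: commQ => //; lia.
Qed.

Lemma Az_near m b : 1 <= m < b -> b < n - 1 -> Q m ++ Az b ≈ Az b ++ Q m.
Proof.
move=> H1 H2; apply: (@lcancel _ _ (Wz b)).
have HA := Wz_Az b.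
have HQ := shift H1 H2.
rewrite (thru HQ HA) (thru HA HQ) -commQ //; lia.
Qed.

Lemma braid_a1 a : Az a ++ Q a.+1 ≈ Q a.+1 ++ Az a.+1.
Proof. by rewrite AzS catA freeQ. Qed.

Lemma braid_a2 a : a.+1 < n - 1 ->
  Q a.+1 ++ Az a.+1 ++ Az a ≈ Az a.+1 ++ Az a ++ Q a.+1.
Proof.
move=> Ha; rewrite AzS; have := AQ2 Ha; have F1 := freeQ a.+1 true; have F2 := freeQ a.+1 false; simpl in F2.
move: (Az a) (Q a.+1) (qw a.+1 false) F1 F2 => A q iq F1 F2 /= H.
rewrite !catA F1 /= -!catA.
transitivity (iq ++ (q ++ A ++ q ++ A)); first by rewrite [X in pres_eq _ _ X]catA F2.
by rewrite H.
Qed.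
End BW.

Ltac evif := repeat (simpl; match goal with |- context[if ?c then _ else _] =>
  first [rewrite (_ : c = true); last by lia | rewrite (_ : c = false); last by lia] end).

Section Act.
Variable n : nat.
Local Notation L := ('I_(n-1) * bool)%type.
Local Notation "u ≈ v" := (pres_eq (@BRel n) u v) (at level 70).
Local Notation Q i := (@qw n i true).

Definition stepD (i : nat) (b : bool) (p : nat) : seq L * nat :=
  if i.+1 < p then (qw n i.+1 b, p)
  else if p < i then (qw n i b, p)
  else if i.+1 == p then (if b then Az n i else [::], i)
  else if b then ([::], p.+1) else (inv_word (Az n p), p.+1).

Fixpoint D (w : seq (nat * bool)) (p : nat) : seq L * nat :=
  match w with
  | [::] => ([::], p)
  | x :: w' => let r := stepD x.1 x.2 p in let r' := D w' r.2 in (r.1 ++ r'.1, r'.2)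
  end.

Lemma D_cat u v p : D (u ++ v) p = ((D u p).1 ++ (D v (D u p).2).1, (D v (D u p).2).2).
Proof. elim: u p => [|x u IH] p /=; first by case: (D v p). by rewrite IH catA. Qed.

Lemma stepD_range i b p : i.+1 < n -> p < n -> (stepD i b p).2 < n.
Proof. move=> H1 H2; rewrite /stepD; case: ifP => ?; [|case: ifP => ?; [|case: ifP => ?]]; case: b => /=; lia.
Qed.

Lemma D_range w p : all (fun x => x.1.+1 < n) w -> p < n -> (D w p).2 < n.
Proof.
elim: w p => [|x w IH] p //= /andP[Hx Hw] Hp; apply: IH => //; exact: stepD_range.
Qed.

Definition Rel (u v : seq (nat * bool)) := forall p, p < n ->
  (D u p).1 ≈ (D v p).1 /\ (D u p).2 = (D v p).2.

Lemma braid_D a : a.+2 < n -> Rel [:: (a,true);(a.+1,true);(a,true)] [:: (a.+1,true);(a,true);(a.+1,true)].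
Proof.
move=> Ha p Hp; rewrite /= /stepD.
have [H|[H|[H|[H|H]]]] : p < a \/ p = a \/ p = a.+1 \/ p = a.+2 \/ a.+2 < p by lia.
- evif => /=; split => //; rewrite !cats0 braidQ //; lia.
- subst p; evif => /=; split => //.
- subst p; evif => /=; split => //; rewrite !cats0; exact: braid_a1.
- subst p; evif => /=; split => //; rewrite !cats0; apply: braid_a2; lia.
- evif => /=; split => //; rewrite !cats0 braidQ //; lia.
Qed.

Lemma comm_D a b : a.+1 < b -> b.+1 < n -> Rel [:: (a,true);(b,true)] [:: (b,true);(a,true)].
Proof.
move=> Hab Hb p Hp; rewrite /= /stepD.
have [H|[H|[H|[H|[H|[H|H]]]]]] : p < a \/ p = a \/ p = a.+1 \/ a.+1 < p < b \/ p = b \/ p = b.+1 \/ b.+1 < p by lia.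
- evif => /=; split => //; rewrite !cats0 commQ //; lia.
- subst p; evif => /=; split => //.
- subst p; evif => /=; split => //; rewrite !cats0; apply: Az_far; lia.
- evif => /=; split => //; rewrite !cats0 commQ //; lia.
- subst p; evif => /=; split => //.
- subst p; evif => /=; split => //; rewrite !cats0; apply: Az_near; lia.
- evif => /=; split => //; rewrite !cats0 commQ //; lia.
Qed.

Lemma free_D i s : i.+1 < n -> forall p, p < n -> (D [:: (i,s);(i,~~s)] p).1 ≈ [::] /\ (D [:: (i,s);(i,~~s)] p).2 = p.
Proof.
move=> Hi p Hp; rewrite /= /stepD.
have [H|[H|[H|H]]] : i.+1 < p \/ p < i \/ p = i.+1 \/ p = i by lia.
- evif => /=; split => //; rewrite cats0; exact: freeQ.
- evif => /=; split => //; rewrite cats0; exact: freeQ.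
- subst p; case: s; evif => /=; split => //; rewrite !cats0; exact: cancel_r.
- subst p; case: s; evif => /=; split => //; rewrite !cats0; exact: cancel_l.
Qed.

Lemma Rel_sym u v : Rel u v -> Rel v u.
Proof. move=> H p Hp; have [H1 H2] := H p Hp; split => //; by symmetry. Qed.

End Act.

Section T.
Variables (e n k : nat).
Hypothesis hn : 2 < n.
Local Notation "u ≈ v" := (pres_eq (@BRel n) u v) (at level 70).

Definition tl (x : Tgen e n * bool) : nat * bool :=
  (match x.1 with inl _ => 0 | inr j => (val j).+1 end, x.2).

Lemma tl_range (w : seq (Tgen e n * bool)) : all (fun x => x.1.+1 < n) (map tl w).
Proof.
apply/allP => x /mapP[[[i|j] b] _ ->] /=; first lia.
have := ltn_ord j; lia.
Qed.

Lemma T_inv u v : pres_eq (@TRel e n k) u v -> Rel n (map tl u) (map tl v).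
Proof.
elim=> {u v}.
- by move=> w p Hp.
- move=> u v _ H; exact: Rel_sym.
- move=> u v w _ H1 _ H2 p Hp; have [A1 A2] := H1 p Hp; have [B1 B2] := H2 p Hp.
  split; [by rewrite A1 | by rewrite A2].
- move=> a b u v _ H p Hp; rewrite !map_cat !D_cat.
  have Ha := D_range (tl_range a) Hp.
  have [A1 A2] := H _ Ha; rewrite A2 /=; split => //.
  by rewrite A1.
- move=> u v []; clear u v.
  + move=> j1 j2 Hj; rewrite /tl /= Hj; apply: braid_D; have := ltn_ord j2; simpl in Hj; lia.
  + move=> j1 j2 Hj; rewrite /tl /=; apply: comm_D; [simpl in Hj; lia | have := ltn_ord j2; simpl in Hj; lia].
  + move=> j i Hj; rewrite /tl /= Hj; apply: Rel_sym; apply: braid_D; lia.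
  + move=> j i Hj; rewrite /tl /=; apply: Rel_sym; apply: comm_D; [simpl in Hj; lia | have := ltn_ord j; simpl in Hj; lia].
  + by move=> i i' j j' _ _ p Hp.
- move=> g s p Hp /=.
  have Hg : (tl (g, s)).1.+1 < n by have := tl_range [:: (g, s)]; rewrite /= andbT.
  have [H1 H2] := free_D s Hg Hp.
  rewrite /= in H1 H2; by rewrite H1 H2.
Qed.

Lemma image_letter (x : 'I_(n-1) * bool) : 1 < e ->
  (D n (map tl (phi_letter e n k x)) 0).1 ≈ [:: x] /\ (D n (map tl (phi_letter e n k x)) 0).2 = 0.
Proof.
move=> he; have e0 : 0 < e by lia.
case: x => g b; rewrite /phi_letter /=.
have [g0|gp] := posnP (val g).
  rewrite (gen_zero _ _ g0).
  have [i0 [i1 [_ [_ ->]]]] := q1_spec n k e0.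
  have H0 : 0 < n - 1 by lia.
  have Eq : forall c, @qw n 0 c = [:: (g, c)].
    by move=> c; rewrite (qw_ok _ H0); congr [:: (_, _)]; apply: val_inj.
  case: b; rewrite /= /stepD /=; evif => /=; split => //.
    by rewrite /Az /= !cats0 Eq.
  by rewrite cats0 /Az /Wz /= cats0 inv_qw Eq.
have [j [Hj ->]] := gen_pos e k gp.
have Eq : @qw n (val g) b = [:: (g, b)].
  by rewrite (qw_ok _ (ltn_ord g)); congr [:: (_, _)]; apply: val_inj.
have Ej : (val j).+1 = val g by lia.
case: b Eq; rewrite /= /stepD /= Ej => Eq; evif => /=; split => //; by rewrite cats0 Eq.
Qed.

Lemma image_word (u : seq ('I_(n-1) * bool)) : 1 < e ->
  (D n (map tl (phi_word e n k u)) 0).1 ≈ u /\ (D n (map tl (phi_word e n k u)) 0).2 = 0.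
Proof.
move=> he; elim: u => [|x u [IH1 IH2]] //=.
rewrite -/(phi_word e n k u) map_cat D_cat /=.
have [H1 H2] := image_letter x he.
rewrite H2 IH2 H1 IH1; split => //.
Qed.

Lemma injective_phi u v : 1 < e ->
  pres_eq (@TRel e n k) (phi_word e n k u) (phi_word e n k v) -> u ≈ v.
Proof.
move=> he H; have Hn0 : 0 < n by lia.
have [A1 _] := T_inv H Hn0.
have [U1 _] := image_word u he; have [V1 _] := image_word v he.
by rewrite -U1 A1 V1.
Qed.
End T.

Theorem mainTheorem13 (n e k : nat) (hn : 3 <= n) (he : 2 <= e)
    (hk1 : 1 <= k) (hk2 : k <= e - 1) :
  (* the image of q_1 is t~_i t~_(i-k) for every i in Z/eZ *)
  (forall (a : 'I_(n-1)) (i i' : 'I_e), val a = 0 ->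
     val i' = (val i + (e - k)) %% e ->
     pres_eq (@TRel e n k) [:: (inl i, true); (inl i', true)]
             (phi_word e n k [:: (a, true)])) /\
  (* well-defined homomorphism B(2,1,n-1) -> B^(k)(e,e,n) *)
  (forall u v : seq ('I_(n-1) * bool),
     pres_eq (@BRel n) u v -> pres_eq (@TRel e n k) (phi_word e n k u) (phi_word e n k v)) /\
  (* injective *)
  (forall u v : seq ('I_(n-1) * bool),
     pres_eq (@TRel e n k) (phi_word e n k u) (phi_word e n k v) -> pres_eq (@BRel n) u v).
Proof.
have e0 : 0 < e by apply: leq_trans he.
split.
  move=> a i i' a0 Hi'; rewrite phi1 gen_zero //.
  have [i0 [i1 [H0 [H1 ->]]]] := q1_spec n k e0.
  apply: pe_rel; apply: trel_tt => //; by rewrite H0.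
split; last by move=> u v; apply: injective_phi.
move=> u v; elim=> {u v}.
- move=> w; exact: pe_refl.
- move=> u v _; exact: pe_sym.
- move=> u v w _ H1 _ H2; exact: pe_trans H1 H2.
- move=> a b u v _ H; rewrite !phi_cat; exact: pe_ctx.
- move=> u v []; clear u v.
  + move=> a b a0 b1.
    have [i0 [i1 [H0 [H1 Eq]]]] := q1_spec n k e0.
    have [j [Hj Ej]] := @gen_pos e n k b (ltac:(by rewrite b1)).
    have j0 : val j = 0 by rewrite Hj b1.
    rewrite /phi_word /= /phi_letter /= (gen_zero _ _ a0) Ej Eq /=.
    pose i2 : 'I_e := Ordinal (ltn_pmod (val i1 + (e - k)) e0).
    have tt1 : @TRel e n k [:: (inl i0, true); (inl i1, true)] [:: (inl i1, true); (inl i2, true)].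
      by apply: trel_tt; rewrite // H0.
    apply: (step (p:=[:: (inl i0, true); (inl i1, true); (inr j, true)]) (q:=[:: (inr j, true)]) tt1) => /=.
    apply: (stepr (p:=[:: (inl i0, true)]) (q:=[:: (inl i2, true); (inr j, true)]) (trel_st k i1 j0)) => /=.
    apply: pe_sym.
    apply: (step (p:=[:: (inr j, true); (inl i0, true); (inl i1, true); (inr j, true)]) (q:=[::]) tt1) => /=.
    apply: (stepr (p:=[:: (inr j, true); (inl i0, true)]) (q:=[:: (inl i2, true)]) (trel_st k i1 j0)) => /=.
    apply: (step (p:=[::]) (q:=[:: (inl i1, true); (inr j, true); (inl i2, true)]) (trel_st k i0 j0)) => /=.
    apply: (step (p:=[:: (inl i0, true); (inr j, true)]) (q:=[:: (inr j, true); (inl i2, true)]) tt1) => /=.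
    apply: (stepr (p:=[:: (inl i0, true); (inr j, true); (inl i1, true)]) (q:=[::]) (trel_st k i2 j0)) => /=.
    exact: pe_refl.
  + move=> a b a1 ab.
    have [ja [Ha Ea]] := @gen_pos e n k a a1.
    have [jb [Hb Eb]] := @gen_pos e n k b (ltac:(by rewrite ab)).
    rewrite /phi_word /= /phi_letter /= Ea Eb /=.
    apply: pe_rel; apply: trel_sbraid; rewrite Ha Hb ab; lia.
  + move=> a b ab.
    have [jb [Hb Eb]] := @gen_pos e n k b (ltac:(by apply: leq_trans ab)).
    have jb1 : 1 <= val jb by rewrite Hb; move: ab; case: (val b) => // -[|m] //=; case: (val a).
    case: (posnP (val a)) => a0.
      have [i0 [i1 [H0 [H1 Eq]]]] := q1_spec n k e0.
      rewrite /phi_word /= /phi_letter /= (gen_zero _ _ a0) Eb Eq /=.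
      apply: (stepr (p:=[:: (inl i0, true)]) (q:=[::]) (trel_stcomm k i1 jb1)) => /=.
      apply: (stepr (p:=[::]) (q:=[:: (inl i1, true)]) (trel_stcomm k i0 jb1)) => /=.
      exact: pe_refl.
    have [ja [Ha Ea]] := @gen_pos e n k a a0.
    rewrite /phi_word /= /phi_letter /= Ea Eb /=.
    apply: pe_rel; apply: trel_scomm; rewrite Ha Hb; move: a0 ab; case: (val a) => // m _.
    case: (val b) => // -[|p] //=.
- move=> g s; rewrite /phi_word /= cats0 /phi_letter /=.
  case: s => /=; first exact: cancel_inv.
  rewrite -{2}(inv_wordK (gen_image e n k g)); exact: cancel_inv.
Qed.
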